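(* Let $E$ and $D$ be open ellipsoids in $\mathbb{R}^n$, $n\ge2$ (sets of the form $\{x: {}^t(x-c)P(x-c)<1\}$ with $P$ positive definite), whose boundaries do not intersect transversally at any point, i.e. at every point of $\partial E\cap\partial D$ the normal vectors to $\partial E$ and $\partial D$ are linearly dependent. If $E\cap D\ne\emptyset$, then $E\subset D$ or $D\subset E$. *)

(* Defs.v *)
From HB Require Import structures.
From mathcomp Require Import all_boot all_order all_algebra.
From mathcomp Require Import reals.
Set Implicit Arguments. Unset Strict Implicit. Unset Printing Implicit Defensive.
Import Order.TTheory GRing.Theory Num.Theory.
Local Open Scope ring_scope.

Definition qform (R : realType) (n : nat) (P : 'M[R]_n) (c x : 'cV[R]_n) : R :=
  (((x - c)^T *m P *m (x - c)) 0 0).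

Definition posdef (R : realType) (n : nat) (P : 'M[R]_n) : Prop :=
  P^T = P /\ forall x : 'cV[R]_n, x != 0 -> 0 < ((x^T *m P *m x) 0 0).

Definition ellipsoid (R : realType) (n : nat) (P : 'M[R]_n) (c : 'cV[R]_n)
  : 'cV[R]_n -> Prop := fun x => qform P c x < 1.

Definition ellipsoid_boundary (R : realType) (n : nat) (P : 'M[R]_n) (c : 'cV[R]_n)
  : 'cV[R]_n -> Prop := fun x => qform P c x = 1.

(* normal vector to the boundary at x: the gradient 2 P (x - c) of the
   defining quadratic function *)
Definition ellipsoid_normal (R : realType) (n : nat) (P : 'M[R]_n) (c x : 'cV[R]_n)
  : 'cV[R]_n := 2%:R *: (P *m (x - c)).

Definition lin_dep (R : realType) (n : nat) (u v : 'cV[R]_n) : Prop :=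
  exists a b : R, (a != 0 \/ b != 0) /\ a *: u + b *: v = 0.

(* Main.v *)
Require Import Defs.
From HB Require Import structures.
From mathcomp Require Import all_boot all_order all_algebra.
From mathcomp Require Import reals.
From mathcomp Require Import polyrcf.
From mathcomp Require Import ring lra zify.
From Stdlib Require Import Classical.
Import Order.TTheory GRing.Theory Num.Theory.
Local Open Scope ring_scope.

Definition bil {R : realType} {n : nat} (A : 'M[R]_n) (u v : 'cV[R]_n) : R :=
  (u^T *m A *m v) 0 0.

Lemma bilDl {R : realType} {n : nat} (A : 'M[R]_n) u1 u2 v :
  bil A (u1 + u2) v = bil A u1 v + bil A u2 v.
Proof. by rewrite /bil linearD /= !mulmxDl mxE. Qed.

Lemma bilDr {R : realType} {n : nat} (A : 'M[R]_n) u v1 v2 :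
  bil A u (v1 + v2) = bil A u v1 + bil A u v2.
Proof. by rewrite /bil mulmxDr mxE. Qed.

Lemma bilZl {R : realType} {n : nat} (A : 'M[R]_n) k u v :
  bil A (k *: u) v = k * bil A u v.
Proof. by rewrite /bil linearZ /= -!scalemxAl mxE. Qed.

Lemma bilZr {R : realType} {n : nat} (A : 'M[R]_n) k u v :
  bil A u (k *: v) = k * bil A u v.
Proof. by rewrite /bil -!scalemxAr mxE. Qed.

Lemma bilNl {R : realType} {n : nat} (A : 'M[R]_n) u v :
  bil A (- u) v = - bil A u v.
Proof. by rewrite -scaleN1r bilZl mulN1r. Qed.

Lemma bilNr {R : realType} {n : nat} (A : 'M[R]_n) u v :
  bil A u (- v) = - bil A u v.
Proof. by rewrite -scaleN1r bilZr mulN1r. Qed.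

Lemma bilBl {R : realType} {n : nat} (A : 'M[R]_n) u1 u2 v :
  bil A (u1 - u2) v = bil A u1 v - bil A u2 v.
Proof. by rewrite bilDl bilNl. Qed.

Lemma bilBr {R : realType} {n : nat} (A : 'M[R]_n) u v1 v2 :
  bil A u (v1 - v2) = bil A u v1 - bil A u v2.
Proof. by rewrite bilDr bilNr. Qed.

Lemma bil_sym {R : realType} {n : nat} (A : 'M[R]_n) u v :
  A^T = A -> bil A u v = bil A v u.
Proof.
move=> hA; rewrite /bil -[in LHS](trmxK (u^T *m A *m v)) [in LHS]mxE.
by rewrite !trmx_mul trmxK hA mulmxA.
Qed.

Lemma poly_ext {R : numDomainType} (p q : {poly R}) :
  (forall x, p.[x] = q.[x]) -> p = q.
Proof.
move=> h; apply/eqP; rewrite -subr_eq0; apply/eqP.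
apply: (@roots_geq_poly_eq0 _ _ [seq i%:R | i <- iota 0 (size (p - q))]).
- by apply/allP => x /mapP [i _ ->]; rewrite /root !hornerE h subrr.
- rewrite map_inj_uniq ?iota_uniq // => i j /eqP; rewrite eqr_nat => /eqP //.
- by rewrite size_map size_iota.
Qed.

Lemma neg_right {R : rcfType} (H : {poly R}) : lead_coef H < 0 ->
  exists b, 0 <= b /\ H.[b] < 0.
Proof.
move=> hl; have hl' : 0 < lead_coef (- H) by rewrite lead_coefN oppr_gt0.
have [n0 hn0] := poly_pinfty_gt_lc hl'.
exists (Num.max n0 0); split; first by rewrite le_max lexx orbT.
have := hn0 (Num.max n0 0); rewrite le_max lexx /= => /(_ isT).
rewrite hornerN lead_coefN; lra.
Qed.

Lemma endgame {R : rcfType} (H : {poly R}) : lead_coef H < 0 -> 0 < H.[0] ->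
  size H = 5%N -> (forall r, root H r -> ('X - r%:P)^+2 %| H) -> False.
Proof.
move=> hl h0 hs hdv.
have [b [b0 hb]] := neg_right H hl.
have [r2 r2i rr2] : {x | x \in `[0, b] & root H x}.
  by apply: polyrcf.poly_ivt => //; rewrite ltW // pmulr_rlt0.
have r2pos : 0 < r2.
  move: r2i; rewrite in_itv /= => /andP [h _]; rewrite lt_neqAle h andbT.
  by apply/eqP => e; move: rr2; rewrite -e /root gt_eqF.
pose H2 := H \Po (- 'X).
have hX : (1 < size (- 'X : {poly R}))%N by rewrite size_polyN size_polyX.
have hl2 : lead_coef H2 < 0.
  rewrite /H2 lead_coef_comp // hs lead_coefN lead_coefX.
  by rewrite /= -signr_odd /= expr0 mulr1.
have h20 : 0 < H2.[0] by rewrite /H2 horner_comp !hornerE oppr0.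
have [b' [b0' hb']] := neg_right H2 hl2.
have [r1' r1i rr1] : {x | x \in `[0, b'] & root H2 x}.
  by apply: polyrcf.poly_ivt => //; rewrite ltW // pmulr_rlt0.
have r1pos : 0 < r1'.
  move: r1i; rewrite in_itv /= => /andP [h _]; rewrite lt_neqAle h andbT.
  by apply/eqP => e; move: rr1; rewrite -e /root gt_eqF.
have rr1' : root H (- r1') by move: rr1; rewrite /H2 /root horner_comp !hornerE.
have hcop : coprimep (('X - (- r1')%:P)^+2) (('X - r2%:P)^+2).
  apply: coprimep_expl; apply: coprimep_expr; apply: coprimep_XsubC2.
  by rewrite opprK gt_eqF // addr_gt0.
have := hdv _ rr1'; have := hdv _ rr2 => d2 d1.
have : ('X - (- r1')%:P)^+2 * ('X - r2%:P)^+2 %| H by rewrite Gauss_dvdp // d1 d2.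
case/dvdpP => k hk.
have hH0 : H != 0 by rewrite -size_poly_eq0 hs.
have hk0 : k != 0 by apply: contraNneq hH0 => e; rewrite hk e mul0r.
have hsk : size k = 1%N.
  move: hs; rewrite hk size_mul ?mulf_neq0 ?expf_neq0 ?polyXsubC_eq0 //.
  rewrite size_mul ?expf_neq0 ?polyXsubC_eq0 // !size_exp_XsubC.
  move=> e; rewrite /= addnS /= in e.
  have e2 : (size k + 4 = 1 + 4)%N by move: e; rewrite addnS.
  exact: (addIn e2).
have hk' : k = (k`_0)%:P by apply: size1_polyC; rewrite hsk.
have hl' : lead_coef H = k`_0.
  rewrite hk lead_coefM lead_coefM !lead_coef_exp !lead_coefXsubC hk' lead_coefC.
  by rewrite !expr1n !mulr1 coefC.
move: h0; rewrite hk hk' hornerCM hornerM !horner_exp !hornerXsubC -hl' => h.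
have hp : 0 <= (0 - - r1') ^+ 2 * (0 - r2) ^+ 2 by rewrite mulr_ge0 // sqr_ge0.
have := mulr_le0_ge0 (ltW hl) hp.
by rewrite leNgt h.
Qed.

Lemma quad_root {R : rcfType} (A B C : R) : 0 < A -> C < 0 ->
  exists s, 0 < s /\ A * s ^+ 2 + 2 * B * s + C = 0 /\
   forall t, 0 <= t -> (A * t ^+ 2 + 2 * B * t + C < 0 <-> t < s).
Proof.
move=> hA hC.
pose D := B ^+ 2 - A * C.
have hD : B ^+ 2 < D by rewrite /D ltrDl oppr_gt0 pmulr_rlt0.
have hD0 : 0 < D by apply: le_lt_trans hD; exact: sqr_ge0.
pose sq := Num.sqrt D.
have hsq : sq ^+ 2 = D by rewrite sqr_sqrtr // ltW.
have hB : `|B| < sq by rewrite -sqrtr_sqr /sq ltr_sqrt.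
have hA0 : A != 0 by rewrite gt_eqF.
pose s := (sq - B) / A; pose s2 := (- sq - B) / A.
have key : forall t, A * t ^+ 2 + 2 * B * t + C = (A * (t - s2)) * (t - s).
  move=> t; have -> : C = (B ^+ 2 - sq ^+ 2) / A by rewrite hsq /D; field.
  by rewrite /s /s2; field.
have hs : 0 < s by rewrite /s divr_gt0 // subr_gt0 (le_lt_trans (ler_norm B)).
have hs2 : s2 < 0.
  have hB' : - B < sq by rewrite (le_lt_trans _ hB) // -normrN ler_norm.
  rewrite /s2 pmulr_llt0 ?invr_gt0 //; lra.
exists s; split => //; split; first by rewrite key subrr mulr0.
move=> t ht; rewrite key pmulr_rlt0 ?subr_lt0 //.
by rewrite mulr_gt0 // subr_gt0 (lt_le_trans hs2).
Qed.


Lemma posdef_pos {R : realType} {n : nat} (P : 'M[R]_n) v :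
  posdef P -> v != 0 -> 0 < bil P v v.
Proof. by move=> [_ h] /h. Qed.

Lemma quad_exp {R : realType} {n : nat} (A : 'M[R]_n) z u : A^T = A ->
  bil A (z + u) (z + u) = bil A z z + 2 * bil A u z + bil A u u.
Proof. move=> hA; rewrite bilDl !bilDr (bil_sym A z u hA); ring. Qed.

Lemma bil2 {R : realType} {n : nat} (A : 'M[R]_n) a b p q : A^T = A ->
  bil A (p *: a + q *: b) (p *: a + q *: b) =
  p ^+ 2 * bil A a a + 2 * p * q * bil A a b + q ^+ 2 * bil A b b.
Proof.
move=> hA; rewrite quad_exp // !bilZl !bilZr (bil_sym A b a hA); ring.
Qed.

Lemma vec_split {R : realType} {n : nat} (x y c : 'cV[R]_n) :
  y - c = (x - c) + (y - x).
Proof. by rewrite [RHS]addrC addrA subrK. Qed.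

Lemma bil_mulE {R : realType} {n : nat} (A : 'M[R]_n) u v :
  bil A u v = (u^T *m (A *m v)) 0 0.
Proof. by rewrite /bil mulmxA. Qed.

Lemma entryZ {R : realType} m n k (A : 'M[R]_(m, n)) i j : (k *: A) i j = k * A i j.
Proof. by rewrite mxE. Qed.
Lemma entryN {R : realType} m n (A : 'M[R]_(m, n)) i j : (- A) i j = - A i j.
Proof. by rewrite mxE. Qed.

Lemma tangent_mu {R : realType} {n : nat} (P Q : 'M[R]_n) (c d x : 'cV[R]_n) :
  bil P (x - c) (x - c) = 1 ->
  lin_dep (ellipsoid_normal P c x) (ellipsoid_normal Q d x) ->
  exists mu, forall v, bil Q v (x - d) = mu * bil P v (x - c).
Proof.
move=> hx [a [b [hab e]]]; move: e; rewrite /ellipsoid_normal !scalerA => e.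
have h2 : (2%:R : R) != 0 by rewrite pnatr_eq0.
have [b0|b0] := eqVneq b 0.
  have ha : a != 0 by case: hab => // /negP; rewrite b0 eqxx.
  move: e; rewrite b0 mul0r scale0r addr0.
  move/eqP; rewrite scaler_eq0 mulf_eq0 (negbTE ha) (negbTE h2) /= => /eqP hPx.
  by move: hx; rewrite bil_mulE hPx mulmx0 mxE => /eqP; rewrite eq_sym oner_eq0.
move/eqP: e; rewrite addr_eq0 => /eqP e.
exists (- a / b) => v.
have := congr1 (fun M => (v^T *m M) 0 0) e.
rewrite /= mulmxN -!scalemxAr entryN !entryZ -!bil_mulE => e2.
have hb2 : b * 2%:R != 0 by rewrite mulf_neq0.
apply: (mulfI hb2).
have -> : b * 2%:R * bil Q v (x - d) = - (a * 2%:R * bil P v (x - c)) by rewrite e2 opprK.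
by field.
Qed.

Lemma tangency_id {R : realType} {n : nat} (P Q : 'M[R]_n) (c d x y : 'cV[R]_n) mu :
  P^T = P -> Q^T = Q ->
  bil P (x - c) (x - c) = 1 -> bil Q (x - d) (x - d) = 1 ->
  bil P (y - c) (y - c) = 1 ->
  (forall v, bil Q v (x - d) = mu * bil P v (x - c)) ->
  bil Q (y - d) (y - d) - 1 = bil Q (y - x) (y - x) - mu * bil P (y - x) (y - x).
Proof.
move=> hP hQ hx1 hx2 hy hmu.
move: hy; rewrite (vec_split x y c) quad_exp // hx1 => hy.
rewrite (vec_split x y d) quad_exp // hx2 hmu.
have e : 2 * bil P (y - x) (x - c) = - bil P (y - x) (y - x) by lra.
rewrite mulrCA e; ring.
Qed.

Lemma bil2' {R : realType} {n : nat} (A : 'M[R]_n) a b q : A^T = A ->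
  bil A (a + q *: b) (a + q *: b) =
  bil A a a + 2 * q * bil A a b + q ^+ 2 * bil A b b.
Proof.
move=> hA; rewrite quad_exp // !bilZl !bilZr (bil_sym A b a hA); ring.
Qed.

Lemma bil0l {R : realType} {n : nat} (A : 'M[R]_n) v : bil A 0 v = 0.
Proof. by rewrite /bil trmx0 !mul0mx mxE. Qed.

Lemma vec_diff {R : realType} {n : nat} (w a b : 'cV[R]_n) s1 s2 t1 t2 :
  (w + s1 *: (a + t1 *: b)) - (w + s2 *: (a + t2 *: b)) =
  (s1 - s2) *: a + (s1 * t1 - s2 * t2) *: b.
Proof.
rewrite !scalerDr !scalerA opprD addrACA subrr add0r opprD addrACA.
by rewrite -!scalerBl.
Qed.

Lemma core {R : realType} {n : nat} (P Q : 'M[R]_n) (c d w w' b : 'cV[R]_n) :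
  posdef P -> posdef Q ->
  (forall x : 'cV[R]_n,
     ellipsoid_boundary P c x -> ellipsoid_boundary Q d x ->
     lin_dep (ellipsoid_normal P c x) (ellipsoid_normal Q d x)) ->
  bil P (w - c) (w - c) = 1 -> bil Q (w - d) (w - d) < 1 ->
  bil P (w' - c) (w' - c) = 1 -> 1 < bil Q (w' - d) (w' - d) ->
  b != 0 -> bil P b (w - c) = 0 -> False.
Proof.
move=> hPd hQd hnt hw1 hw2 hw'1 hw'2 hb0 hbo.
have hPs : P^T = P by case: hPd.
have hQs : Q^T = Q by case: hQd.
pose a := w' - w.
have hw'a : w' = w + a by rewrite /a addrC subrK.
have ha0 : a != 0.
  by apply/eqP => e; move: hw'2; rewrite hw'a e addr0; lra.
pose al := bil P a a.
have hal : 0 < al by apply: posdef_pos.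
pose L0 := bil P a (w - c).
have hL0 : L0 = - al / 2.
  move: hw'1; rewrite hw'a addrAC quad_exp // hw1 -/L0 -/al; lra.
pose be := bil P a b; pose ga := bil P b b.
have hga : 0 < ga by apply: posdef_pos.
pose G0 := bil Q (w - d) (w - d) - 1.
pose ma := bil Q a (w - d); pose mb := bil Q b (w - d).
pose kaa := bil Q a a; pose kab := bil Q a b; pose kbb := bil Q b b.
pose u t := a + t *: b.
pose Nf t := al + 2 * be * t + ga * t ^+ 2.
have hN t : bil P (u t) (u t) = Nf t.
  by rewrite /u bil2' // /Nf /al /be /ga; ring.
have hNpos t : 0 < Nf t.
  rewrite -hN; apply: posdef_pos => //; apply/eqP => e.
  have : bil P (u t) (w - c) = L0 by rewrite /u bilDl bilZl hbo mulr0 addr0.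
  rewrite e bil0l hL0 => /eqP; rewrite eq_sym; apply/negP.
  by rewrite mulf_neq0 ?invr_eq0 ?oppr_eq0 // gt_eqF.
have hNf0 t : Nf t != 0 by rewrite gt_eqF.
pose y t := w + (al / Nf t) *: u t.
have hyf t : bil P (y t - c) (y t - c) = 1.
  rewrite /y addrAC quad_exp // hw1 !bilZl !bilZr hN.
  have -> : bil P (u t) (w - c) = L0 by rewrite /u bilDl bilZl hbo mulr0 addr0.
  by rewrite hL0; field.
have hyg t : Nf t ^+ 2 * (bil Q (y t - d) (y t - d) - 1) =
    G0 * Nf t ^+ 2 + 2 * al * Nf t * (ma + t * mb) +
    al ^+ 2 * (kaa + 2 * t * kab + t ^+ 2 * kbb).
  rewrite /y addrAC quad_exp // !bilZl !bilZr /u bil2' // bilDl bilZl.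
  rewrite /G0 -/ma -/mb -/kaa -/kab -/kbb; by field.
pose h0 := G0 * al ^+ 2 + 2 * al * al * ma + al ^+ 2 * kaa.
pose h1 := 4 * G0 * al * be + 2 * al * (al * mb + 2 * be * ma) + 2 * al ^+ 2 * kab.
pose h2 := G0 * (4 * be ^+ 2 + 2 * al * ga) + 2 * al * (2 * be * mb + ga * ma)
   + al ^+ 2 * kbb.
pose h3 := 4 * G0 * be * ga + 2 * al * ga * mb.
pose h4 := G0 * ga ^+ 2.
pose Hp := Poly [:: h0; h1; h2; h3; h4].
have hH t : Hp.[t] = Nf t ^+ 2 * (bil Q (y t - d) (y t - d) - 1).
  rewrite hyg /Hp horner_Poly /= /h0 /h1 /h2 /h3 /h4 /Nf; ring.
have hy0 : y 0 = w'.
  rewrite /y /u /Nf scale0r addr0 mulr0 expr0n /= mulr0 !addr0 divff ?gt_eqF //.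
  by rewrite scale1r hw'a.
have hH0 : 0 < Hp.[0].
  rewrite hH hy0; apply: mulr_gt0; first by rewrite exprn_gt0.
  by rewrite subr_gt0.
have hG0 : G0 < 0 by rewrite /G0 subr_lt0.
have hh4 : h4 != 0.
  by apply: mulf_neq0; [rewrite lt_eqF | rewrite expf_neq0 // gt_eqF].
have hseq : (Hp : seq R) = [:: h0; h1; h2; h3; h4] by rewrite /Hp (@PolyK _ 0).
apply: (endgame Hp).
- by rewrite lead_coefE hseq /= /h4 pmulr_llt0 // exprn_gt0.
- exact: hH0.
- by rewrite hseq.
move=> r hr.
have hgr : bil Q (y r - d) (y r - d) = 1.
  move: hr; rewrite /root hH mulf_eq0 expf_eq0 /= (negbTE (hNf0 r)) /=.
  by rewrite subr_eq0 => /eqP.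
have [mu hmu] := @tangent_mu _ _ P Q c d (y r) (hyf r) (hnt (y r) (hyf r) hgr).
pose Ka := kaa - mu * al; pose Kb := kab - mu * be; pose Kc := kbb - mu * ga.
pose Lp := (2 * be + ga * r)%:P + ga%:P * 'X.
pose Mp := al%:P + (- (ga * r))%:P * 'X.
pose Qp := Ka%:P * Lp ^+ 2 - (2 * Kb)%:P * (Lp * Mp) + Kc%:P * Mp ^+ 2.
have hpe : (Nf r ^+ 2)%:P * Hp = ('X - r%:P) ^+ 2 * ((al ^+ 2)%:P * Qp).
  apply: poly_ext => t.
  rewrite hornerCM hH (@tangency_id _ _ P Q c d (y r) (y t) mu hPs hQs (hyf r) hgr (hyf t) hmu).
  rewrite /y vec_diff !bil2 // -/al -/be -/ga -/kaa -/kab -/kbb.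
  have ht := hNf0 t; have hr' := hNf0 r.
  rewrite !(hornerD, hornerN, hornerM, hornerC, hornerX, horner_exp, hornerXsubC, hornerCM).
  rewrite /Qp /Lp /Mp /Ka /Kb /Kc /Nf; rewrite /Nf in ht hr'.
  by field; rewrite ht hr'.
have hnz : Nf r ^+ 2 != 0 by rewrite expf_neq0.
rewrite -(dvdpZr _ _ hnz) -mul_polyC hpe.
exact: dvdp_mulIl.
Qed.

Lemma exists_orth {R : realType} {n : nat} (hn : (2 <= n)%N) (p : 'cV[R]_n) :
  exists b : 'cV[R]_n, b != 0 /\ (b^T *m p) 0 0 = 0.
Proof.
have h0 : (0 < n)%N by apply: leq_trans hn.
pose i0 : 'I_n := Ordinal h0; pose i1 : 'I_n := Ordinal hn.
have hi : (i1 == i0) = false by [].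
have [p0|p0] := eqVneq (p i0 0) 0.
  exists (delta_mx i0 0); split.
    apply/eqP => e; have := congr1 (fun M : 'cV[R]_n => M i0 0) e.
    by rewrite /= !mxE !eqxx /=; apply/eqP; rewrite oner_eq0.
  by rewrite trmx_delta -rowE mxE.
exists (p i1 0 *: delta_mx i0 0 - p i0 0 *: delta_mx i1 0); split.
  apply/eqP => e; have := congr1 (fun M : 'cV[R]_n => M i1 0) e.
  rewrite /= !mxE !eqxx hi /= mulr0 mulr1 sub0r; apply/eqP.
  by rewrite oppr_eq0.
rewrite linearB /= !linearZ /= !trmx_delta scalerN mulmxDl mulNmx -!scalemxAl.
rewrite -!rowE !mxE; ring.
Qed.

Lemma line_pt {R : realType} {n : nat} (A : 'M[R]_n) (z u : 'cV[R]_n) :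
  posdef A -> u != 0 -> bil A z z < 1 ->
  exists s, 0 < s /\ bil A (z + s *: u) (z + s *: u) = 1 /\
    forall t, 0 <= t -> (bil A (z + t *: u) (z + t *: u) < 1 <-> t < s).
Proof.
move=> hAd hu hz; have hAs : A^T = A by case: hAd.
have e t : bil A (z + t *: u) (z + t *: u) - 1 =
    bil A u u * t ^+ 2 + 2 * bil A u z * t + (bil A z z - 1).
  by rewrite quad_exp // !bilZl !bilZr; ring.
have hC : bil A z z - 1 < 0 by rewrite subr_lt0.
have [s [hs [hs1 hs2]]] := quad_root _ (bil A u z) _ (posdef_pos A u hAd hu) hC.
exists s; split => //; split.
  by apply/eqP; rewrite -subr_eq0 e hs1.
move=> t ht; rewrite -hs2 // -e subr_lt0 //.
Qed.

Theorem proposition2p4 (R : realType) (n : nat) (hn : (2 <= n)%N)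
  (P Q : 'M[R]_n) (c d : 'cV[R]_n) (hP : posdef P) (hQ : posdef Q)
  (hnontrans : forall x : 'cV[R]_n,
     ellipsoid_boundary P c x -> ellipsoid_boundary Q d x ->
     lin_dep (ellipsoid_normal P c x) (ellipsoid_normal Q d x))
  (hmeet : exists x : 'cV[R]_n, ellipsoid P c x /\ ellipsoid Q d x) :
  (forall x, ellipsoid P c x -> ellipsoid Q d x) \/
  (forall x, ellipsoid Q d x -> ellipsoid P c x).
Proof.
case: (classic (forall x, ellipsoid P c x -> ellipsoid Q d x)) => [h|hPQ].
  by left.
case: (classic (forall x, ellipsoid Q d x -> ellipsoid P c x)) => [h|hQP].
  by right.
exfalso.
have [y [hyE hyD]] : exists y, ellipsoid P c y /\ ~ ellipsoid Q d y.
  apply: NNPP => hne; apply: hPQ => x hx; apply: NNPP => hnx; apply: hne.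
  by exists x.
have [z [hzD hzE]] : exists z, ellipsoid Q d z /\ ~ ellipsoid P c z.
  apply: NNPP => hne; apply: hQP => x hx; apply: NNPP => hnx; apply: hne.
  by exists x.
case: hmeet => z0 [hz0E hz0D].
have hPs : P^T = P by case: hP.
have hQs : Q^T = Q by case: hQ.
change (is_true (bil P (y - c) (y - c) < 1)) in hyE.
change (is_true (bil P (z0 - c) (z0 - c) < 1)) in hz0E.
change (is_true (bil Q (z - d) (z - d) < 1)) in hzD.
change (is_true (bil Q (z0 - d) (z0 - d) < 1)) in hz0D.
have hyD' : 1 <= bil Q (y - d) (y - d) by rewrite leNgt; apply/negP.
have hzE' : 1 <= bil P (z - c) (z - c) by rewrite leNgt; apply/negP.
pose u1 := z - z0.
have hu1 : u1 != 0.
  apply/eqP => e; move: hzE'; rewrite (_ : z = z0); first by rewrite leNgt hz0E.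
  by apply/eqP; rewrite -subr_eq0 -/u1 e.
have [s1 [hs1p [hs1 hs1i]]] := line_pt P (z0 - c) u1 hP hu1 hz0E.
have hs1le : s1 <= 1.
  rewrite leNgt; apply/negP => h1; move: ((hs1i 1 ler01).2 h1).
  by rewrite scale1r /u1 -vec_split ltNge hzE'.
pose w := z0 + s1 *: u1.
have hw1 : bil P (w - c) (w - c) = 1 by rewrite /w addrAC.
have hgq s : bil Q (z0 - d + s *: u1) (z0 - d + s *: u1) =
    bil Q (z0 - d) (z0 - d) + 2 * s * bil Q u1 (z0 - d) + s ^+ 2 * bil Q u1 u1.
  by rewrite quad_exp // !bilZl !bilZr; ring.
have hAq : 0 < bil Q u1 u1 by apply: posdef_pos.
have hw2 : bil Q (w - d) (w - d) < 1.
  have := hgq 1; rewrite scale1r /u1 -vec_split -/u1 => h1.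
  rewrite /w addrAC hgq; move: hzD; rewrite h1 => h1'.
  set G := bil Q (z0 - d) (z0 - d) in hz0D h1' *.
  set B := bil Q u1 (z0 - d) in h1' *.
  set A := bil Q u1 u1 in hAq h1' *.
  have e : G + 2 * s1 * B + s1 ^+ 2 * A =
     (1 - s1) * G + s1 * (G + 2 * 1 * B + 1 ^+ 2 * A) - s1 * (1 - s1) * A by ring.
  rewrite e.
  have : 0 <= s1 * (1 - s1) * A.
    by apply: mulr_ge0; [apply: mulr_ge0; [exact: ltW | rewrite subr_ge0] | exact: ltW].
  nra.
pose u2 := y - z0.
have hu2 : u2 != 0.
  apply/eqP => e; move: hyD'; rewrite (_ : y = z0); first by rewrite leNgt hz0D.
  by apply/eqP; rewrite -subr_eq0 -/u2 e.
have [s2 [hs2p [hs2 hs2i]]] := line_pt P (z0 - c) u2 hP hu2 hz0E.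
have hs2gt : 1 < s2.
  by apply/(hs2i 1 ler01); rewrite scale1r /u2 -vec_split.
pose w' := z0 + s2 *: u2.
have hw'1 : bil P (w' - c) (w' - c) = 1 by rewrite /w' addrAC.
have hgq2 s : bil Q (z0 - d + s *: u2) (z0 - d + s *: u2) =
    bil Q (z0 - d) (z0 - d) + 2 * s * bil Q u2 (z0 - d) + s ^+ 2 * bil Q u2 u2.
  by rewrite quad_exp // !bilZl !bilZr; ring.
have hAq2 : 0 < bil Q u2 u2 by apply: posdef_pos.
have hw'2 : 1 < bil Q (w' - d) (w' - d).
  have := hgq2 1; rewrite scale1r /u2 -vec_split -/u2 => h1.
  rewrite /w' addrAC hgq2; move: hyD'; rewrite h1 => h1'.
  set G := bil Q (z0 - d) (z0 - d) in hz0D h1' *.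
  set B := bil Q u2 (z0 - d) in h1' *.
  set A := bil Q u2 u2 in hAq2 h1' *.
  have e : G + 2 * s2 * B + s2 ^+ 2 * A =
     s2 * (G + 2 * 1 * B + 1 ^+ 2 * A) - (s2 - 1) * G + s2 * (s2 - 1) * A by ring.
  rewrite e.
  have : 0 <= s2 * (s2 - 1) * A.
    by apply: mulr_ge0; [apply: mulr_ge0; [exact: ltW | rewrite subr_ge0 ltW] | exact: ltW].
  nra.
have [b [hb0 hbo]] := exists_orth hn (P *m (w - c)).
apply: (@core _ _ P Q c d w w' b hP hQ hnontrans hw1 hw2 hw'1 hw'2 hb0).
by rewrite bil_mulE.
Qed.
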